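(* Let $q=2^\ell$, $r\in[q-1]$, and $0\le a,b\le q-1$. The monomial $x^ay^b$ is $(\Phi,q-r)^*$-good if and only if for all integers $i,j\ge0$ with $i\le_2 b$ and $j\le_2 b-i$ we have $(2i+j+a)\ \mathrm{mod}^*\ q< q-r$.
   Context: $\Phi$ is the set of all polynomials $\phi(x)=\alpha x^2+\beta x+\gamma$ with $\alpha,\beta,\gamma\in\mathbb F_q$. For $f\in\mathbb F_q[x,y]$ and $\phi\in\Phi$, $f|_\phi$ denotes the reduction of $f(x,\phi(x))$ modulo $x^q-x$ (a polynomial of degree $\le q-1$). A polynomial (in particular a monomial) $f$ is $(\Phi,q-r)^*$-good if $\deg f|_\phi<q-r$ for all $\phi\in\Phi$, and bad otherwise. For nonnegative integers $a,b$ with binary digits $a_1,a_2,\dots$ and $b_1,b_2,\dots$, $a\le_2 b$ means $a_i\le b_i$ for all $i$. For $a\ge0$: $a\ \mathrm{mod}^*\ q=a$ if $a\le q-1$; $=q-1$ if $a\ne0$ and $(q-1)\mid a$; otherwise $a\bmod (q-1)$. *)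

(* Defs.v *)
From HB Require Import structures.
From mathcomp Require Import all_boot all_order all_algebra all_field.
Set Implicit Arguments. Unset Strict Implicit. Unset Printing Implicit Defensive.
Import GRing.Theory.
Local Open Scope ring_scope.

Definition phiPoly (F : fieldType) (alpha beta gamma : F) : {poly F} :=
  alpha%:P * 'X^2 + beta%:P * 'X + gamma%:P.

(* (x^a y^b)|_phi : reduction of x^a phi(x)^b modulo x^q - x *)
Definition restrict_mono (F : fieldType) (q a b : nat) (phi : {poly F}) : {poly F} :=
  ('X^a * phi ^+ b) %% ('X^q - 'X).

(* deg f|_phi < q - r for all phi in Phi (with deg 0 = -oo);
   deg p < n  <->  size p <= n  *)
Definition mono_good (F : fieldType) (q r a b : nat) : Prop :=
  forall alpha beta gamma : F,
    (size (restrict_mono q a b (phiPoly alpha beta gamma)) <= q - r)%N.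

Definition le2 (a b : nat) : Prop :=
  forall k : nat, ((a %/ 2 ^ k) %% 2 <= (b %/ 2 ^ k) %% 2)%N.

Definition modstar (a q : nat) : nat :=
  if (a <= q - 1)%N then a
  else if (a != 0)%N && (q - 1 %| a)%N then (q - 1)%N
  else (a %% (q - 1))%N.

(* Main.v *)
Require Import Defs.
From HB Require Import structures.
From mathcomp Require Import all_boot all_order all_algebra all_field.
From mathcomp Require Import zify ring.
Set Implicit Arguments. Unset Strict Implicit. Unset Printing Implicit Defensive.

Lemma le2rec x y : le2 x y <-> (odd x <= odd y) /\ le2 x./2 y./2.
Proof.
split.
- move=> h; split; first by have := h 0; rewrite !expn0 !divn1 !modn2.
  move=> k; have := h k.+1; by rewrite expnS !divnMA !divn2.
- case=> h1 h2 [|k]; first by rewrite !expn0 !divn1 !modn2.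
  by rewrite expnS !divnMA !divn2.
Qed.

Lemma le2_leq i b : le2 i b -> i <= b.
Proof.
elim: i {-2}i (leqnn i) b => [|n IH] i hi b h; first by move: hi; rewrite leqn0 => /eqP->.
case/le2rec: h => h1 h2.
have hi2 : i./2 <= n.
  case: i hi {h1 h2} => // i hi; have := odd_double_half i.+1.
  case: (odd i.+1) => /=; rewrite -muln2; lia.
have := IH _ hi2 _ h2.
rewrite -[in X in _ -> X](odd_double_half i) -[in X in _ -> X](odd_double_half b).
move: h1; case: (odd i); case: (odd b) => //= _; rewrite -!muln2; lia.
Qed.

Lemma le2_0 k : le2 0 k.
Proof. by move=> m; rewrite div0n mod0n. Qed.

Lemma subhalf i b : i <= b -> odd i <= odd b ->
  odd (b - i) = (odd b && ~~ odd i) /\ (b - i)./2 = b./2 - i./2.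
Proof.
move: (odd_double_half b) (odd_double_half i).
move: (b./2) (i./2) (odd b) (odd i) => B I ob oi <- <-.
case: ob; case: oi => //= h _.
- have -> : (1 + B.*2 - (1 + I.*2)) = false + (B - I).*2 by rewrite -!muln2; lia.
  by rewrite oddD odd_double half_bit_double.
- have -> : (1 + B.*2 - (0 + I.*2)) = true + (B - I).*2 by rewrite -!muln2; lia.
  by rewrite oddD odd_double half_bit_double.
- have -> : (0 + B.*2 - (0 + I.*2)) = false + (B - I).*2 by rewrite -!muln2; lia.
  by rewrite oddD odd_double half_bit_double.
Qed.

Definition Q b i j := le2 i b /\ le2 j (b - i).

Lemma Qrec b i j : Q b i j <-> (odd i + odd j <= odd b) /\ Q b./2 i./2 j./2.
Proof.
rewrite /Q; split.
- case=> /[dup] hib /le2rec [h1 h2] /le2rec [h3 h4].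
  have [e1 e2] := subhalf (le2_leq hib) h1.
  rewrite e1 e2 in h3 h4; split => //.
  by move: h1 h3; case: (odd i); case: (odd j); case: (odd b).
- case=> h [h2 h4].
  have h1 : odd i <= odd b by move: h; case: (odd i); case: (odd j); case: (odd b).
  have hib : le2 i b by apply/le2rec.
  have [e1 e2] := subhalf (le2_leq hib) h1.
  split => //; apply/le2rec; rewrite e1 e2; split => //.
  by move: h; case: (odd i); case: (odd j); case: (odd b).
Qed.

Fixpoint Pn n b i j : bool :=
  if n is n'.+1 then (odd i + odd j <= odd b) && Pn n' b./2 i./2 j./2 else true.

Lemma half_lt x n : x < 2 ^ n.+1 -> x./2 < 2 ^ n.
Proof. by rewrite ltn_half_double expnSr muln2. Qed.

Lemma Pn_Q n b i j : b < 2^n -> i < 2^n -> j < 2^n -> Pn n b i j <-> Q b i j.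
Proof.
elim: n b i j => [|n IH] b i j.
  rewrite expn0 !ltnS !leqn0 => /eqP-> /eqP-> /eqP->; split => // _.
  by split; apply: le2_0.
move=> hb hi hj /=; rewrite (Qrec b i j) -(IH _ _ _ (half_lt hb) (half_lt hi) (half_lt hj)).
by split; [move/andP | move=> ?; apply/andP].
Qed.

Lemma modstar_step m q : 2 <= q -> q <= m -> modstar m q = modstar (m - (q - 1)) q.
Proof.
move=> hq hm; rewrite /modstar.
have -> : (m <= q - 1) = false by apply/negbTE; rewrite -ltnNge; lia.
have em : m = (m - (q - 1)) + (q - 1) by lia.
have hm0 : (m != 0) = true by apply/eqP; lia.
rewrite hm0 /= {1 2}em dvdn_addl // modnDr.
case: (leqP (m - (q - 1)) (q - 1)) => h.
- case: (ltngtP (m - (q - 1)) (q - 1)) h => // h _.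
  + rewrite modn_small //; case: ifP => // /dvdn_leq; lia.
  + by rewrite h dvdnn.
- have hm1 : (m - (q - 1) != 0) = true by apply/eqP; lia.
  by rewrite hm1.
Qed.

Import GRing.Theory.
Local Open Scope ring_scope.

Lemma size_XqX (F : fieldType) q : (1 < q)%N -> size ('X^q - 'X : {poly F}) = q.+1.
Proof.
move=> hq; rewrite size_polyDl size_polyXn //.
by rewrite size_polyN size_polyX ltnS.
Qed.

Lemma Xmod (F : fieldType) q m : (2 <= q)%N ->
  ('X^m : {poly F}) %% ('X^q - 'X) = 'X^(modstar m q).
Proof.
move=> hq; elim: m {-2}m (leqnn m) => [|n IH] m hm.
  move: hm; rewrite leqn0 => /eqP->; rewrite /modstar leq0n modp_small //.
  rewrite size_polyXn size_XqX //; lia.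
case: (leqP m (q - 1)) => h.
  rewrite /modstar h modp_small // size_XqX // size_polyXn; lia.
have e : ('X^m : {poly F}) = 'X^(m - q) * ('X^q - 'X) + 'X^(m - (q - 1)).
  rewrite mulrBr -!exprD -exprSr subnK; last lia.
  have -> : ((m - q).+1 = m - (q - 1))%N by lia.
  by rewrite subrK.
rewrite e modpD modp_mull add0r IH; last lia.
by rewrite -modstar_step //; lia.
Qed.

Lemma sum_half (V : nmodType) m (f : nat -> V) :
  \sum_(i < m.*2) f i = \sum_(i < m) (f i.*2 + f i.*2.+1).
Proof.
elim: m => [|m IH]; first by rewrite !big_ord0.
by rewrite doubleS !big_ord_recr /= IH addrA.
Qed.

Lemma sqr_sum (R : comNzRingType) (h2 : 2%:R = 0 :> R) (I : Type) (r : seq I) (f : I -> R) :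
  (\sum_(i <- r) f i) ^+ 2 = \sum_(i <- r) (f i) ^+ 2.
Proof.
elim: r => [|x r IH]; first by rewrite !big_nil expr0n.
by rewrite !big_cons sqrrD IH -mulr_natr h2 mulr0 addr0.
Qed.

Section Expand.
Variable F : fieldType.
Hypothesis h2 : 2%:R = 0 :> F.
Variables al be ga : F.

Definition term n b i j : {poly F} :=
  ((Pn n b i j)%:R * (al ^+ i * be ^+ j * ga ^+ (b - i - j))) *: 'X^(i.*2 + j).

Lemma h2P : 2%:R = 0 :> {poly F}.
Proof. by rewrite -polyC_natr h2 polyC0. Qed.

Lemma term_step n b i j : (i < 2 ^ n)%N -> (j < 2 ^ n)%N -> (b./2 < 2 ^ n)%N ->
  phiPoly al be ga ^+ odd b * term n b./2 i j ^+ 2 =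
  term n.+1 b i.*2 j.*2 + term n.+1 b i.*2 j.*2.+1 +
  (term n.+1 b i.*2.+1 j.*2 + term n.+1 b i.*2.+1 j.*2.+1).
Proof.
move=> hi hj hb2; rewrite /term /= !odd_double !doubleK !uphalf_double /=.
case hP: (Pn n b./2 i j); last first.
  by rewrite !andbF /= !mul0r !scale0r expr0n mulr0 !addr0.
have [hi2 hj2] : (i <= b./2 /\ j <= b./2 - i)%N.
  by have [/le2_leq ? /le2_leq ?] := (Pn_Q hb2 hi hj).1 hP.
have eb := odd_double_half b.
set k := (b./2 - i - j)%N.
have eX1 : (i.*2.*2 + j.*2 = (i.*2 + j).*2)%N by rewrite doubleD.
have eX2 : (i.*2.*2 + j.*2.+1 = ((i.*2 + j).*2).+1)%N by rewrite doubleD addnS.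
have eX3 : (i.*2.+1.*2 + j.*2 = ((i.*2 + j).*2).+2)%N by rewrite doubleS doubleD.
have sq : forall (R : nzRingType) (x : R) m, x ^+ m.*2 = (x ^+ m) ^+ 2.
  by move=> R x m; rewrite -exprM muln2.
case ob: (odd b) eb => /= eb.
  have e1 : (b - i.*2 - j.*2 = (k.*2).+1)%N by rewrite /k -!muln2; lia.
  have e2 : (b - i.*2 - j.*2.+1 = k.*2)%N by rewrite /k -!muln2; lia.
  have e3 : (b - i.*2.+1 - j.*2 = k.*2)%N by rewrite /k -!muln2; lia.
  rewrite eX1 eX2 eX3 ?mul0r ?scale0r ?addr0 !mul1r exprZn.
  rewrite e1 e2 e3 !exprS !sq expr0 mulr1 -!mul_polyC !(polyCM, rmorphXn) /phiPoly.
  ring.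
have e1 : (b - i.*2 - j.*2 = k.*2)%N by rewrite /k -!muln2; lia.
rewrite eX1 eX2 eX3 ?mul0r ?scale0r ?addr0 !mul1r exprZn.
rewrite e1 !exprS !sq expr0 ?mul1r -!mul_polyC !(polyCM, rmorphXn).
ring.
Qed.

Lemma expand n b : (b < 2 ^ n)%N ->
  phiPoly al be ga ^+ b = \sum_(i < 2 ^ n) \sum_(j < 2 ^ n) term n b i j.
Proof.
elim: n b => [|n IH] b hb.
  move: hb; rewrite expn0 ltnS leqn0 => /eqP->.
  by rewrite !big_ord1 /term /= !expr0 !mulr1 scale1r.
have eb := odd_double_half b.
have hb2 := half_lt hb.
have -> : phiPoly al be ga ^+ b = phiPoly al be ga ^+ odd b * (phiPoly al be ga ^+ b./2) ^+ 2.
  by rewrite -exprM -exprD muln2 eb.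
rewrite (IH b./2) // (sqr_sum h2P).
under eq_bigr do rewrite (sqr_sum h2P).
rewrite mulr_sumr expnSr muln2.
rewrite (sum_half _ (fun i => \sum_(j < (2 ^ n).*2) term n.+1 b i j)).
apply: eq_bigr => i _; rewrite mulr_sumr.
rewrite (sum_half _ (fun j => term n.+1 b i.*2 j)).
rewrite (sum_half _ (fun j => term n.+1 b i.*2.+1 j)) -big_split /=.
apply: eq_bigr => j _.
exact: term_step.
Qed.
End Expand.

Lemma modp_sum (F : fieldType) (d : {poly F}) (I : Type) (r : seq I) (f : I -> {poly F}) :
  (\sum_(i <- r) f i) %% d = \sum_(i <- r) (f i %% d).
Proof.
elim: r => [|x r IH]; first by rewrite !big_nil mod0p.
by rewrite !big_cons modpD IH.
Qed.

Lemma restrict_sum (F : fieldType) (h2 : 2%:R = 0 :> F) (al be ga : F) q a b n :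
  (b < 2 ^ n)%N -> (2 <= q)%N ->
  restrict_mono q a b (phiPoly al be ga) =
  \sum_(i < 2 ^ n) \sum_(j < 2 ^ n)
    ((Pn n b i j)%:R * (al ^+ i * be ^+ j * ga ^+ (b - i - j))) *:
      'X^(modstar (a + (i.*2 + j)) q).
Proof.
move=> hb hq; rewrite /restrict_mono (expand h2 _ _ _ hb) mulr_sumr modp_sum.
apply: eq_bigr => i _; rewrite mulr_sumr modp_sum.
apply: eq_bigr => j _; rewrite /term -scalerAr -exprD modpZl Xmod //.
Qed.

Lemma vanish (F : finFieldType) (p : {poly F}) :
  (size p <= #|F|)%N -> (forall x, p.[x] = 0) -> p = 0.
Proof.
move=> hs hx; apply: (@roots_geq_poly_eq0 _ p (enum F)).
- by apply/allP => x _; rewrite /root hx.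
- exact: enum_uniq.
- by rewrite -cardE.
Qed.

Local Close Scope ring_scope.
Unset Implicit Arguments.
Set Strict Implicit.

Theorem mainTheorem3 (F : finFieldType) (l : nat) (hF : #|F| = 2 ^ l)
  (r : nat) (hr1 : 1 <= r) (hr2 : r <= 2 ^ l - 1)
  (a b : nat) (ha : a <= 2 ^ l - 1) (hb : b <= 2 ^ l - 1) :
  mono_good F (2 ^ l) r a b <->
  (forall i j : nat, le2 i b -> le2 j (b - i) ->
     modstar (2 * i + j + a) (2 ^ l) < 2 ^ l - r).
Proof.
have hq : (2 <= 2 ^ l)%N by lia.
have hl : (0 < l)%N by case: l hq hF {hr2 ha hb} => //; rewrite expn0.
have h2 : (2%:R = 0 :> F)%R.
  have := card_finPcharP hF (isT : prime 2); exact: pcharf0.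
have hb' : (b < 2 ^ l)%N by lia.
split.
- move=> good i j hi hj.
  have hib := le2_leq hi; have hjb := le2_leq hj.
  have hil : (i < 2 ^ l)%N by lia.
  have hjl : (j < 2 ^ l)%N by lia.
  have hP : Pn l b i j by apply/(Pn_Q hb' hil hjl).
  rewrite mul2n addnC ltnNge; apply/negP => hd.
  set d := modstar (a + (i.*2 + j)) (2 ^ l) in hd.
  have claim : forall al be : F,
    (\sum_(i < 2 ^ l) \sum_(j < 2 ^ l)
      ((Pn l b i j)%:R * (al ^+ i * be ^+ j) * (d == modstar (a + (i.*2 + j)) (2 ^ l))%:R) = 0)%R.
    move=> al be; have := good al be 1%R.
    rewrite (@restrict_sum F h2 al be 1%R (2 ^ l) a b l hb' hq) => hs.
    have := nth_default 0%R (leq_trans hs hd).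
    rewrite coef_sum => h; apply: etrans h; apply: eq_bigr => i' _; rewrite coef_sum.
    by apply: eq_bigr => j' _; rewrite coefZ coefXn expr1n mulr1.
  have hA : forall be : F, (\sum_(j < 2 ^ l)
      ((Pn l b i j)%:R * be ^+ j * (d == modstar (a + (i.*2 + j)) (2 ^ l))%:R) = 0)%R.
    move=> be.
    pose pA := (\poly_(i < 2 ^ l) \sum_(j < 2 ^ l)
      ((Pn l b i j)%:R * be ^+ j * (d == modstar (a + (i.*2 + j)) (2 ^ l))%:R))%R.
    have : pA = 0%R.
      apply: vanish; first by rewrite hF size_poly.
      move=> al; rewrite horner_poly; apply: etrans (claim al be).
      apply: eq_bigr => i' _; rewrite mulr_suml; apply: eq_bigr => j' _.
      ring.
    by move/(congr1 (fun p : {poly F} => (p`_i)%R)); rewrite coef_poly hil coef0.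
  pose pB := (\poly_(j < 2 ^ l) ((Pn l b i j)%:R * (d == modstar (a + (i.*2 + j)) (2 ^ l))%:R : F))%R.
  have : pB = 0%R.
    apply: vanish; first by rewrite hF size_poly.
    move=> be; rewrite horner_poly; apply: etrans (hA be).
    by apply: eq_bigr => j' _; ring.
  move/(congr1 (fun p : {poly F} => (p`_j)%R)); rewrite coef_poly hjl coef0 hP eqxx /=.
  by rewrite mul1r; apply/eqP; rewrite oner_neq0.
- move=> H al be ga; rewrite (@restrict_sum F h2 al be ga (2 ^ l) a b l hb' hq).
  apply: (big_ind (fun p : {poly F} => size p <= 2 ^ l - r)%N).
  + by rewrite size_poly0.
  + by move=> p1 p2 s1 s2; apply: leq_trans (size_polyD _ _) _; rewrite geq_max s1.
  move=> i _; apply: (big_ind (fun p : {poly F} => size p <= 2 ^ l - r)%N).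
  + by rewrite size_poly0.
  + by move=> p1 p2 s1 s2; apply: leq_trans (size_polyD _ _) _; rewrite geq_max s1.
  move=> j _; case hP: (Pn l b i j); last by rewrite mul0r scale0r size_poly0.
  apply: leq_trans (size_scale_leq _ _) _; rewrite size_polyXn.
  have [hi hj] := (Pn_Q hb' (ltn_ord i) (ltn_ord j)).1 hP.
  by have := H _ _ hi hj; rewrite mul2n addnC.
Qed.
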